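(* Let $(l_i)$ be pairwise distinct labels indexed by a set containing $j_0$ and the finite set $J$, and let $\sigma,\tau_j\in\mathbb{T}$. Then (1) if $j_0\in J$, $\langle l_{j_0}:\sigma\rangle+\langle l_j:\tau_j\mid j\in J\rangle=\langle l_j:\tau_j\mid j\in J\rangle$; (2) if $j_0\notin J$, $\langle l_{j_0}:\sigma\rangle+\langle l_j:\tau_j\mid j\in J\rangle=\langle l_{j_0}:\sigma\rangle\cap\langle l_j:\tau_j\mid j\in J\rangle$.
   Context: $\mathbb{T}\ni\sigma ::= a\mid\omega\mid\sigma_1\to\sigma_2\mid\sigma_1\cap\sigma_2\mid\rho$ and record types $\mathbb{T}_R\ni\rho ::= \langle\rangle\mid\langle l:\sigma\rangle\mid\rho_1+\rho_2\mid\rho_1\cap\rho_2$. Subtyping $\le$ is the least preorder with: $\sigma\le\omega$; $\omega\le\omega\to\omega$; $\sigma\cap\tau\le\sigma$; $\sigma\cap\tau\le\tau$; $\sigma\le\tau_1,\sigma\le\tau_2\Rightarrow\sigma\le\tau_1\cap\tau_2$; $(\sigma\to\tau_1)\cap(\sigma\to\tau_2)\le\sigma\to\tau_1\cap\tau_2$; $\sigma_2\le\sigma_1,\tau_1\le\tau_2\Rightarrow\sigma_1\to\tau_1\le\sigma_2\to\tau_2$; $\langle l:\sigma\rangle\le\langle\rangle$; $\langle l:\sigma\rangle\cap\langle l:\tau\rangle\le\langle l:\sigma\cap\tau\rangle$; $\sigma\le\tau\Rightarrow\langle l:\sigma\rangle\le\langle l:\tau\rangle$; $\rho+\langle\rangle=\langle\rangle+\rho=\rho$;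 $(\rho_1+\rho_2)+\rho_3=\rho_1+(\rho_2+\rho_3)$; $(\rho_1\cap\rho_2)+\rho_3=(\rho_1+\rho_3)\cap(\rho_2+\rho_3)$; $\langle l:\sigma\rangle+(\langle l:\tau\rangle\cap\rho)=\langle l:\tau\rangle\cap\rho$; $\langle l:\sigma\rangle+(\langle l':\tau\rangle\cap\rho)=\langle l':\tau\rangle\cap(\langle l:\sigma\rangle+\rho)$ if $l\neq l'$; $\rho_1\le\rho_2\Rightarrow\rho_1+\rho\le\rho_2+\rho$; $\rho_1=\rho_2\Rightarrow\rho+\rho_1=\rho+\rho_2$. $=$ means $\le$ in both directions. $\langle l_i:\sigma_i\mid i\in I\rangle$ stands for $\bigcap_{i\in I}\langle l_i:\sigma_i\rangle$ if $I\neq\emptyset$ and $\langle\rangle$ if $I=\emptyset$. *)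

(* Defs.v *)
From mathcomp Require Import all_boot.
Set Implicit Arguments. Unset Strict Implicit. Unset Printing Implicit Defensive.

Definition tvar := nat.
Definition label := nat.

(* One syntax for T; record types T_R are the sub-grammar recognised by
   [is_rec] (intersection of records is the same constructor [TCap]). *)
Inductive ty : Type :=
| TVar   : tvar -> ty
| TOmega : ty
| TArr   : ty -> ty -> ty
| TCap   : ty -> ty -> ty
| TEmpty : ty
| TField : label -> ty -> ty
| TPlus  : ty -> ty -> ty.

Fixpoint is_rec (t : ty) : Prop :=
  match t with
  | TEmpty => True
  | TField _ _ => True
  | TPlus r1 r2 => is_rec r1 /\ is_rec r2
  | TCap r1 r2 => is_rec r1 /\ is_rec r2
  | _ => False
  end.

(* The subtyping relation: least preorder closed under the listed rules.
   An axiom "A = B" contributes both A <= B and B <= A. *)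
Inductive sub : ty -> ty -> Prop :=
| sub_refl s : sub s s
| sub_trans s t u : sub s t -> sub t u -> sub s u
| sub_omega s : sub s TOmega
| sub_omega_arr : sub TOmega (TArr TOmega TOmega)
| sub_capl s t : sub (TCap s t) s
| sub_capr s t : sub (TCap s t) t
| sub_glb s t1 t2 : sub s t1 -> sub s t2 -> sub s (TCap t1 t2)
| sub_arr_cap s t1 t2 :
    sub (TCap (TArr s t1) (TArr s t2)) (TArr s (TCap t1 t2))
| sub_arr s1 s2 t1 t2 : sub s2 s1 -> sub t1 t2 -> sub (TArr s1 t1) (TArr s2 t2)
| sub_field_empty l s : sub (TField l s) TEmpty
| sub_field_cap l s t : sub (TCap (TField l s) (TField l t)) (TField l (TCap s t))
| sub_field l s t : sub s t -> sub (TField l s) (TField l t)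
| sub_plus_empty_r1 r : is_rec r -> sub (TPlus r TEmpty) r
| sub_plus_empty_r2 r : is_rec r -> sub r (TPlus r TEmpty)
| sub_plus_empty_l1 r : is_rec r -> sub (TPlus TEmpty r) r
| sub_plus_empty_l2 r : is_rec r -> sub r (TPlus TEmpty r)
| sub_plus_assoc1 r1 r2 r3 : is_rec r1 -> is_rec r2 -> is_rec r3 ->
    sub (TPlus (TPlus r1 r2) r3) (TPlus r1 (TPlus r2 r3))
| sub_plus_assoc2 r1 r2 r3 : is_rec r1 -> is_rec r2 -> is_rec r3 ->
    sub (TPlus r1 (TPlus r2 r3)) (TPlus (TPlus r1 r2) r3)
| sub_plus_capdist1 r1 r2 r3 : is_rec r1 -> is_rec r2 -> is_rec r3 ->
    sub (TPlus (TCap r1 r2) r3) (TCap (TPlus r1 r3) (TPlus r2 r3))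
| sub_plus_capdist2 r1 r2 r3 : is_rec r1 -> is_rec r2 -> is_rec r3 ->
    sub (TCap (TPlus r1 r3) (TPlus r2 r3)) (TPlus (TCap r1 r2) r3)
| sub_plus_same1 l s t r : is_rec r ->
    sub (TPlus (TField l s) (TCap (TField l t) r)) (TCap (TField l t) r)
| sub_plus_same2 l s t r : is_rec r ->
    sub (TCap (TField l t) r) (TPlus (TField l s) (TCap (TField l t) r))
| sub_plus_diff1 l l' s t r : l <> l' -> is_rec r ->
    sub (TPlus (TField l s) (TCap (TField l' t) r))
        (TCap (TField l' t) (TPlus (TField l s) r))
| sub_plus_diff2 l l' s t r : l <> l' -> is_rec r ->
    sub (TCap (TField l' t) (TPlus (TField l s) r))
        (TPlus (TField l s) (TCap (TField l' t) r))
| sub_plus_mono r1 r2 r : is_rec r1 -> is_rec r2 -> is_rec r ->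
    sub r1 r2 -> sub (TPlus r1 r) (TPlus r2 r)
| sub_plus_cong1 r r1 r2 : is_rec r -> is_rec r1 -> is_rec r2 ->
    sub r1 r2 -> sub r2 r1 -> sub (TPlus r r1) (TPlus r r2)
| sub_plus_cong2 r r1 r2 : is_rec r -> is_rec r1 -> is_rec r2 ->
    sub r1 r2 -> sub r2 r1 -> sub (TPlus r r2) (TPlus r r1).

Definition tyeq (s t : ty) : Prop := sub s t /\ sub t s.

Fixpoint recs (I : Type) (l : I -> label) (s : I -> ty) (J : seq I) : ty :=
  match J with
  | [::] => TEmpty
  | [:: j] => TField (l j) (s j)
  | j :: J' => TCap (TField (l j) (s j)) (recs l s J')
  end.

(* Main.v *)
Require Import Defs.
From mathcomp Require Import all_boot.
Set Implicit Arguments. Unset Strict Implicit.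

Fixpoint recs' (I : Type) (l : I -> label) (s : I -> ty) (J : seq I) : ty :=
  match J with
  | [::] => TEmpty
  | j :: J' => TCap (TField (l j) (s j)) (recs' l s J')
  end.

Lemma recs'_rec I l s J : is_rec (@recs' I l s J).
Proof. by elim: J => //= j J ->. Qed.

Lemma recs_rec I l s J : is_rec (@recs I l s J).
Proof. elim: J => //= j [|k J] //= IH. Qed.

Lemma tyeq_trans a b c : tyeq a b -> tyeq b c -> tyeq a c.
Proof. move=> [? ?] [? ?]; split; apply: sub_trans; eauto. Qed.
Lemma tyeq_sym a b : tyeq a b -> tyeq b a.
Proof. by case. Qed.

Lemma recs_eq I l s J : tyeq (@recs I l s J) (@recs' I l s J).
Proof.
elim: J => [|j [|k J] IH]; first by split; constructor.
- split => /=; [apply: sub_glb; constructor|constructor].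
- case: IH => [H1 H2]; split => /=.
  + apply: sub_glb; first by constructor. apply: sub_trans H1; constructor.
  + apply: sub_glb; first by constructor. apply: sub_trans H2; constructor.
Qed.

Lemma cap_cong a b c : tyeq b c -> tyeq (TCap a b) (TCap a c).
Proof.
case=> H1 H2; split; apply: sub_glb; try constructor;
  apply: sub_trans; try apply: sub_capr; done.
Qed.

Theorem lemma3p6 (I : eqType) (l : I -> label) (j0 : I) (J : seq I)
    (sigma : ty) (tau : I -> ty) :
  injective l -> uniq J ->
  (j0 \in J ->
     tyeq (TPlus (TField (l j0) sigma) (recs l tau J)) (recs l tau J)) /\
  (j0 \notin J ->
     tyeq (TPlus (TField (l j0) sigma) (recs l tau J))
          (TCap (TField (l j0) sigma) (recs l tau J))).
Proof.
move=> linj _.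
set F := TField (l j0) sigma.
have HF : is_rec F by [].
have E := recs_eq l tau J.
have EP : tyeq (TPlus F (recs l tau J)) (TPlus F (recs' l tau J)).
  case: E => E1 E2; split; [apply: sub_plus_cong1|apply: sub_plus_cong2];
    rewrite //; apply: recs_rec || apply: recs'_rec.
suff [H1 H2] : (j0 \in J -> tyeq (TPlus F (recs' l tau J)) (recs' l tau J)) /\
  (j0 \notin J -> tyeq (TPlus F (recs' l tau J)) (TCap F (recs' l tau J))).
  split => Hj.
  - apply: tyeq_trans EP _; apply: tyeq_trans (H1 Hj) _; exact: tyeq_sym.
  - apply: tyeq_trans EP _; apply: tyeq_trans (H2 Hj) _.
    apply: cap_cong; exact: tyeq_sym.
elim: J {E EP} => [|j J [IH1 IH2]] /=.
  split => // _; split.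
  - apply: sub_glb; [exact: sub_plus_empty_r1|apply: sub_trans (sub_plus_empty_r1 HF) _; constructor].
  - apply: sub_trans (sub_plus_empty_r2 HF); constructor.
have HR := recs'_rec l tau J.
have [Ej|Nj] := eqVneq j0 j.
  subst j. rewrite inE eqxx /=; split => // _.
  split; [exact: sub_plus_same1|exact: sub_plus_same2].
have Nl : l j0 <> l j by move=> /linj E; rewrite E eqxx in Nj.
have D : tyeq (TPlus F (TCap (TField (l j) (tau j)) (recs' l tau J)))
              (TCap (TField (l j) (tau j)) (TPlus F (recs' l tau J))).
  split; [exact: sub_plus_diff1|exact: sub_plus_diff2].
rewrite inE (negbTE Nj) /=; split => Hj.
- apply: tyeq_trans D _; apply: cap_cong; exact: IH1.
- apply: tyeq_trans D _; apply: tyeq_trans (cap_cong _ (IH2 Hj)) _.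
  split; repeat apply: sub_glb; try constructor;
    (apply: sub_trans; [apply: sub_capr|constructor]).
Qed.
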